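(* Let $\mathcal{D}$ be an $S(2,k,v)$ and $G_0=0$-$\mathrm{BIG}(\mathcal{D})$. If $v>k^3-2k^2+2k$, then every maximum independent set of $G_0$ is of the form $T(x)$ for some element $x$, and consequently $\alpha(G_0)=\frac{v-1}{k-1}$.
   Context: A Steiner $2$-design $S(2,k,v)$ ($2<k<v$) is a pair $(V,\mathcal{B})$ with $|V|=v$ and $\mathcal{B}$ a collection of $k$-subsets of $V$ (blocks) such that every $2$-subset of $V$ lies in exactly one block. The $0$-block intersection graph $0$-$\mathrm{BIG}(\mathcal{D})$ has the blocks as vertices, two blocks adjacent iff they are disjoint. For an element $x\in V$, $T(x)$ denotes the set of the $\frac{v-1}{k-1}$ blocks containing $x$. $\alpha(G)$ is the independence number. *)

(* Defs.v *)
From mathcomp Require Import all_boot.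
Set Implicit Arguments. Unset Strict Implicit. Unset Printing Implicit Defensive.

Section Defs.
Variable V : finType.

Definition steiner2 (k : nat) (B : {set {set V}}) : Prop :=
  [/\ 2 < k, k < #|V|,
      (forall b, b \in B -> #|b| = k) &
      (forall x y : V, x != y ->
         #|[set b in B | (x \in b) && (y \in b)]| = 1)].

Definition T (B : {set {set V}}) (x : V) : {set {set V}} :=
  [set b in B | x \in b].

(* Adjacency in the 0-block intersection graph: distinct disjoint blocks. *)
Definition big0_adj (b1 b2 : {set V}) : bool := (b1 != b2) && [disjoint b1 & b2].

Definition big0_indep (B S : {set {set V}}) : bool :=
  (S \subset B) && [forall b1 in S, forall b2 in S, ~~ big0_adj b1 b2].

Definition big0_max_indep (B S : {set {set V}}) : Prop :=
  big0_indep B S /\ (forall S', big0_indep B S' -> #|S'| <= #|S|).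

Definition alpha0 (B : {set {set V}}) : nat :=
  \max_(S in powerset B | big0_indep B S) #|S|.
End Defs.

(* Main.v *)
Require Import Defs.
From mathcomp Require Import all_boot.
From Stdlib Require Import Lia.

Section S.
Variable V : finType.
Variable k : nat.
Variable B : {set {set V}}.
Hypothesis hk : 2 < k.
Hypothesis hkV : k < #|V|.
Hypothesis hcard : forall b, b \in B -> #|b| = k.
Hypothesis hpair : forall x y : V, x != y -> #|[set b in B | (x \in b) && (y \in b)]| = 1.

Lemma uniq_blk x y b1 b2 : x != y -> b1 \in B -> b2 \in B ->
  x \in b1 -> y \in b1 -> x \in b2 -> y \in b2 -> b1 = b2.
Proof.
move=> nxy h1 h2 x1 y1 x2 y2.
have /eqP/cards1P [b0 hb0] := hpair _ _ nxy.
have: b1 \in [set b in B | (x \in b) && (y \in b)] by rewrite inE h1 x1 y1.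
have: b2 \in [set b in B | (x \in b) && (y \in b)] by rewrite inE h2 x2 y2.
by rewrite hb0 !inE => /eqP -> /eqP ->.
Qed.

Lemma indic (I : finType) (A C : pred I) : \sum_(i in A) (i \in C : nat) = #|[predI A & C]|.
Proof.
rewrite -sum1_card big_mkcondr /=; apply: eq_bigr => i _.
by case: (i \in C).
Qed.

Lemma cardT x : #|[set b in B | x \in b]| * (k - 1) = #|V| - 1.
Proof.
have -> : #|V| - 1 = #|[set~ x]| by rewrite cardsC1 subn1.
transitivity (\sum_(y in [set~ x]) \sum_(b in [set b in B | x \in b]) (y \in b : nat)).
  2: { rewrite -sum1_card; apply: eq_bigr => y; rewrite !inE => nyx.
       rewrite indic.
       have <- := hpair x y _; last by rewrite eq_sym.
       apply: eq_card => b; rewrite !inE; by case: (b \in B). }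
rewrite exchange_big /= -sum1_card big_distrl /=.
apply: eq_bigr => b; rewrite inE => /andP [hb hx].
rewrite mul1n indic.
have -> : #|[predI [set~ x] & mem b]| = #|b :\ x|.
  by apply: eq_card => y; rewrite !inE andbC.
by rewrite -(hcard _ hb) (cardsD1 x b) hx add1n subn1.
Qed.

Definition pk (p : V) (b c : {set V}) := odflt p [pick y in b :&: c].

Lemma pk_in p (b c : {set V}) : ~~ [disjoint b & c] -> pk p b c \in b :&: c.
Proof.
rewrite /pk -setI_eq0 => /set0Pn [y hy].
case: pickP => [z hz|h] //.
by have := h y; rewrite hy.
Qed.

Lemma star (S : {set {set V}}) : S \subset B ->
  (forall b1 b2 : {set V}, b1 \in S -> b2 \in S -> b1 != b2 -> ~~ [disjoint b1 & b2]) ->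
  k + (k-1)*(k-1) < #|S| -> exists p, S \subset [set b in B | p \in b].
Proof.
move=> sSB hint hbig.
have hint' : forall b1 b2 : {set V}, b1 \in S -> b2 \in S -> ~~ [disjoint b1 & b2].
  move=> b1 b2 h1 h2; case: (eqVneq b1 b2) => [<-|ne]; last exact: hint.
  rewrite -setI_eq0 setIid; apply/set0Pn.
  have : 0 < #|b1| by rewrite (hcard _ (subsetP sSB _ h1)) (ltn_trans _ hk).
  by rewrite card_gt0 => /set0Pn.
have : 1 < #|S| by apply: leq_trans _ hbig; rewrite ltnS addn_gt0 (ltn_trans _ hk).
case/card_gt1P => [L1 [L2 [hL1 hL2 nL]]].
have := hint _ _ hL1 hL2 nL; rewrite -setI_eq0 => /set0Pn [p /setIP [pL1 pL2]].
case: (boolP [forall b in S, p \in b]) => [/forall_inP allp|/forall_inPn [M hM pM]].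
  exists p; apply/subsetP => b hb; rewrite inE (subsetP sSB _ hb); exact: allp.
exfalso; move: hbig; apply/negP; rewrite -leqNgt.
have inB : forall b, b \in S -> b \in B by move=> b; apply: (subsetP sSB).
rewrite -(cardsID [set b in B | p \in b] S); apply: leq_add.
- rewrite -(hcard _ (inB _ hM)).
  have inj : {in S :&: [set b in B | p \in b] &, injective (fun b => pk p b M)}.
    move=> b1 b2; rewrite !inE => /andP [h1 /andP [_ p1]] /andP [h2 /andP [_ p2]] e.
    have /setIP [y1 m1] := pk_in p _ _ (hint' _ _ h1 hM).
    have /setIP [y2 m2] := pk_in p _ _ (hint' _ _ h2 hM).
    rewrite e in y1 m1.
    apply: (uniq_blk p (pk p b2 M)) => //; try exact: inB.
    by apply/eqP => ep; rewrite ep m1 in pM.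
  rewrite -(card_in_imset inj); apply: subset_leq_card; apply/subsetP => y.
  case/imsetP => b; rewrite inE => /andP [hb _] ->.
  by have /setIP [] := pk_in p _ _ (hint' _ _ hb hM).
- have cL : forall L, L \in S -> p \in L -> #|L :\ p| = k - 1.
    by move=> L hL pL; rewrite -(hcard _ (inB _ hL)) (cardsD1 p L) pL add1n subn1.
  rewrite -{1}(cL _ hL1 pL1) -(cL _ hL2 pL2) -cardsX.
  have inj : {in S :\: [set b in B | p \in b] &, injective (fun b => (pk p b L1, pk p b L2))}.
    move=> b1 b2; rewrite !inE => /andP [np1 h1] /andP [np2 h2] [e1 e2].
    rewrite (inB _ h1) /= in np1; rewrite (inB _ h2) /= in np2.
    have /setIP [a1 l1] := pk_in p _ _ (hint' _ _ h1 hL1).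
    have /setIP [c1 l2] := pk_in p _ _ (hint' _ _ h1 hL2).
    have /setIP [a2 _] := pk_in p _ _ (hint' _ _ h2 hL1).
    have /setIP [c2 _] := pk_in p _ _ (hint' _ _ h2 hL2).
    rewrite -e1 in a2; rewrite -e2 in c2.
    apply: (uniq_blk (pk p b1 L1) (pk p b1 L2)) => //; try exact: inB.
    apply/eqP => eac; move: nL; apply/negP; rewrite negbK; apply/eqP.
    apply: (uniq_blk p (pk p b1 L1)) => //; try exact: inB.
    - by apply/eqP => ep; rewrite ep a1 in np1.
    - by rewrite eac.
  rewrite -(card_in_imset inj); apply: subset_leq_card; apply/subsetP => y.
  case/imsetP => b; rewrite !inE => /andP [np hb] ->.
  rewrite (inB _ hb) /= in np.
  have /setIP [a1 l1] := pk_in p _ _ (hint' _ _ hb hL1).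
  have /setIP [c1 l2] := pk_in p _ _ (hint' _ _ hb hL2).
  rewrite /= l1 l2 !andbT.
  by apply/andP; split; apply/eqP => ep; [move: a1 | move: c1]; rewrite ep (negbTE np).
Qed.
End S.

Lemma arith k r : 2 < k -> k ^ 3 - 2 * k ^ 2 + 2 * k < r * (k - 1) + 1 -> k + (k-1)*(k-1) < r.
Proof.
move=> hk H.
have e3 : k ^ 3 = k * k * k by rewrite !expnS expn0 muln1 mulnA.
have e2 : k ^ 2 = k * k by rewrite !expnS expn0 muln1.
rewrite e3 e2 in H.
have hk1 : 0 < k - 1 by rewrite subn_gt0 (ltn_trans _ hk).
rewrite -(ltn_pmul2r hk1).
move/leP: H; move/leP: hk => hk H. apply/leP.
rewrite -!plusE -!multE -!minusE in H *.
destruct k as [|[|[|j]]]; try lia.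
Qed.

Theorem lemma6 (V : finType) (k : nat) (B : {set {set V}}) :
  steiner2 k B ->
  k ^ 3 - 2 * k ^ 2 + 2 * k < #|V| ->
  (forall S, big0_max_indep B S -> exists x : V, S = T B x) /\
  alpha0 B = (#|V| - 1) %/ (k - 1).
Proof.
move=> [hk hkV hcard hpair] hv.
have hk1 : 0 < k - 1 by rewrite subn_gt0 (ltn_trans _ hk).
have hV0 : 0 < #|V| by rewrite (leq_ltn_trans _ hkV).
have [x0 _] : exists x0 : V, x0 \in V by apply/card_gt0P.
have cT : forall x, #|T B x| = (#|V| - 1) %/ (k - 1).
  by move=> x; rewrite -(cardT _ _ _ hcard hpair x) mulnK.
have hr : k + (k-1)*(k-1) < #|T B x0|.
  apply: arith hk _; rewrite cT divnK; first by rewrite subnK.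
  by rewrite -(cardT _ _ _ hcard hpair x0) dvdn_mull.
have key : forall S, big0_indep B S -> #|S| <= #|T B x0| /\
                  (#|T B x0| <= #|S| -> exists p, S = T B p).
  move=> S /andP [sSB /forall_inP hS].
  have hint : forall b1 b2 : {set V}, b1 \in S -> b2 \in S -> b1 != b2 -> ~~ [disjoint b1 & b2].
    move=> b1 b2 h1 h2 ne; have /forall_inP := hS _ h1; move/(_ _ h2).
    by rewrite /big0_adj ne.
  case: (leqP #|S| (k + (k-1)*(k-1))) => hs.
    split; first by rewrite ltnW // (leq_ltn_trans hs hr).
    by move=> h; have := leq_ltn_trans (leq_trans h hs) hr; rewrite ltnn.
  have [p sp] := star _ _ _ hk hcard hpair _ sSB hint hs.
  have cp : #|T B x0| = #|[set b in B | p \in b]| by rewrite (cT x0) -(cT p).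
  split; first by rewrite cp subset_leq_card.
  move=> h; exists p; apply/eqP; rewrite eqEcard sp /=.
  by rewrite /T -cp.
have indT : forall x, big0_indep B (T B x).
  move=> x; apply/andP; split; first by apply/subsetP => b; rewrite inE => /andP [].
  apply/forall_inP => b1; rewrite inE => /andP [_ h1].
  apply/forall_inP => b2; rewrite inE => /andP [_ h2].
  rewrite /big0_adj negb_and; apply/orP; right.
  by rewrite -setI_eq0; apply/set0Pn; exists x; rewrite inE h1 h2.
split.
  move=> S [iS mS]; have [_] := key S iS; apply.
  exact: mS (indT x0).
rewrite -(cT x0); apply/eqP; rewrite eqn_leq; apply/andP; split.
  by apply/bigmax_leqP => S /andP [_ iS]; case: (key S iS).
rewrite /alpha0; apply: (leq_bigmax_cond (T B x0)) => /=.
by rewrite indT andbT powersetE; case/andP: (indT x0).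
Qed.
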